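(* Let $F$ be a field of characteristic zero and let $D$ be a derivation of the Lie algebra $W^*(1,0)$ with $D(\partial)=0$. Then $D=f\,\mathrm{ad}_{\partial}+S$ for some $f\in F$ and some scalar derivation $S$ of $W^*(1,0)$.
   Context: $W^*(1,0)$ is the Lie algebra over $F$ with basis $\{e^{ax}x^i\partial: a\in\mathbb Z, i\in\mathbb N\}$ ($\mathbb N$ the nonnegative integers), viewed as vector fields $f\partial$ with $f$ in the $F$-algebra $F[e^{\pm x},x]$ (basis $e^{ax}x^i$, multiplication adding exponents, $\partial(e^{ax}x^i)=ae^{ax}x^i+ie^{ax}x^{i-1}$), with bracket $[f\partial,g\partial]=(f\partial(g)-g\partial(f))\partial$; $\partial$ denotes the basis element $e^{0x}x^0\partial$ and $\mathrm{ad}_\partial=[\partial,\cdot]$. A derivation $D$ is a scalar derivation if for every basis element $l$ one has $D(l)=f_l\,l$ for some scalar $f_l\in F$. *)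

(* Defs.v *)
From HB Require Import structures.
From mathcomp Require Import all_boot all_order all_algebra.
From mathcomp Require Import finmap.
From mathcomp Require Export monalg.
Set Implicit Arguments. Unset Strict Implicit. Unset Printing Implicit Defensive.
Import Order.TTheory GRing.Theory Num.Theory.
Local Open Scope ring_scope.

(* The F-algebra F[e^{+-x}, x]: the free F-module on the basis e^{ax}x^i,
   indexed by k = (a, i) : int * nat.  The basis element e^{ax}x^i is << (a,i) >>.
   A vector field f d is identified with its coefficient f, so W^*(1,0) has the
   same carrier, with basis e^{ax}x^i d = << (a,i) >>. *)
Definition Wstar (F : fieldType) := {malg F[(int * nat)%type]}.

Section W.
Variable F : fieldType.
Local Notation A := (Wstar F).

Definition ebasis (a : int) (i : nat) : A := << (a, i) >>.

Definition amul (f g : A) : A :=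
  \sum_(k <- msupp f) \sum_(l <- msupp g)
     (f@_k * g@_l) *: ebasis (k.1 + l.1) (k.2 + l.2)%N.

Definition aderiv (f : A) : A :=
  \sum_(k <- msupp f)
     f@_k *: ((k.1)%:~R *: ebasis k.1 k.2 + (k.2)%:R *: ebasis k.1 (k.2).-1).

(* [f d, g d] = (f d(g) - g d(f)) d *)
Definition wbracket (f g : A) : A := amul f (aderiv g) - amul g (aderiv f).

Definition wpartial : A := ebasis 0 0.

Definition ad_partial (u : A) : A := wbracket wpartial u.

Definition is_derivation (D : A -> A) : Prop :=
  [/\ (forall u v, D (u + v) = D u + D v),
      (forall (c : F) u, D (c *: u) = c *: D u) &
      (forall u v, D (wbracket u v) = wbracket (D u) v + wbracket u (D v))].

Definition is_scalar_derivation (S : A -> A) : Prop :=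
  is_derivation S /\
  forall (a : int) (i : nat), exists fl : F, S (ebasis a i) = fl *: ebasis a i.

End W.

(* Main.v *)
Require Import Defs.
From HB Require Import structures.
From mathcomp Require Import all_boot all_order all_algebra.
From mathcomp Require Import finmap monalg.
Import GRing.Theory.
Local Open Scope ring_scope.
Set Implicit Arguments. Unset Strict Implicit.

Section Work.
Variable F : fieldType.
Local Notation A := (Wstar F).
Local Notation K := (int * nat)%type.

Definition lmap (V : lmodType F) (h : K -> V) (g : A) : V :=
  \sum_(k <- msupp g) g@_k *: h k.

Lemma lmapEw V h (d : {fset K}) g : (msupp g `<=` d)%fset ->
  @lmap V h g = \sum_(k <- d) g@_k *: h k.
Proof.
move=> le; rewrite /lmap (big_fset_incl _ le) //= => x xd /mcoeff_outdom ->.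
by rewrite scale0r.
Qed.

Definition lin (V : lmodType F) (L : A -> V) :=
  forall (c : F) u v, L (c *: u + v) = c *: L u + L v.

Lemma lmap_lin (V : lmodType F) h : lin (@lmap V h).
Proof.
move=> c u v.
have le : (msupp (c *: u + v) `<=` msupp u `|` msupp v)%fset.
  apply: fsubset_trans (msuppD_le _ _) _; apply: fsetSU; exact: msuppZ_le.
rewrite (lmapEw h le) (lmapEw h (fsubsetUl (msupp u) (msupp v))).
rewrite (lmapEw h (fsubsetUr (msupp u) (msupp v))) scaler_sumr -big_split.
by apply: eq_bigr => k _; rewrite mcoeffD mcoeffZ scalerDl scalerA.
Qed.

Lemma lmapU V h (c : F) k : @lmap V h << c *g k >> = c *: h k.
Proof. by rewrite (lmapEw h msuppU_le) big_seq_fset1 mcoeffUU. Qed.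

Lemma lmapU1 V h k : @lmap V h << k >> = h k.
Proof. by rewrite lmapU scale1r. Qed.

Lemma lmap_h (V : lmodType F) (h1 h2 : K -> V) (c : F) (g : A) :
  lmap (fun k => c *: h1 k + h2 k) g = c *: lmap h1 g + lmap h2 g.
Proof.
rewrite /lmap scaler_sumr -big_split; apply: eq_bigr => k _.
by rewrite scalerDr !scalerA mulrC.
Qed.

Section LinProps.
Variables (V : lmodType F) (L : A -> V) (HL : lin L).
Lemma lin0 : L 0 = 0.
Proof.
have := HL 1 0 0; rewrite !scale1r addr0 => /(congr1 (fun x => x - L 0)).
by rewrite subrr addrK => <-.
Qed.
Lemma linD u v : L (u + v) = L u + L v.
Proof. by have := HL 1 u v; rewrite !scale1r. Qed.
Lemma linZ c u : L (c *: u) = c *: L u.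
Proof. by have := HL c u 0; rewrite !addr0 lin0 addr0. Qed.
Lemma linN u : L (- u) = - L u.
Proof. by rewrite -(scaleN1r u) linZ scaleN1r. Qed.
Lemma linB u v : L (u - v) = L u - L v.
Proof. by rewrite linD linN. Qed.
End LinProps.

Lemma malgUZ (c : F) k : << c *g k >> = c *: (<< k >> : A).
Proof. by apply/malgP => k'; rewrite mcoeffZ [LHS]mcoeffU mcoeffU mulr_natr. Qed.

Lemma lin_expand (V : lmodType F) (L : A -> V) : lin L ->
  forall u, L u = \sum_(k <- msupp u) u@_k *: L << k >>.
Proof.
move=> HL u; rewrite {1}(monalgE u).
rewrite (big_morph L (linD HL) (lin0 HL)); apply: eq_bigr => k _.
by rewrite malgUZ linZ.
Qed.

Lemma lin_ext (V : lmodType F) (L1 L2 : A -> V) : lin L1 -> lin L2 ->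
  (forall k, L1 << k >> = L2 << k >>) -> forall u, L1 u = L2 u.
Proof.
move=> H1 H2 E u; rewrite (lin_expand H1) (lin_expand H2).
by apply: eq_bigr => k _; rewrite E.
Qed.

Lemma lin_add (V : lmodType F) (L1 L2 : A -> V) : lin L1 -> lin L2 -> lin (fun u => L1 u + L2 u).
Proof.
move=> H1 H2 c u v; rewrite H1 H2 scalerDr.
by rewrite -!addrA; congr (_ + _); rewrite [RHS]addrC -!addrA; congr (_ + _); rewrite addrC.
Qed.
Lemma lin_scale (V : lmodType F) (L : A -> V) (d : F) : lin L -> lin (fun u => d *: L u).
Proof. by move=> H c u v; rewrite H scalerDr !scalerA mulrC. Qed.
Lemma lin_opp (V : lmodType F) (L : A -> V) : lin L -> lin (fun u => - L u).
Proof. by move=> H c u v; rewrite H opprD scalerN. Qed.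
Lemma lin_sub (V : lmodType F) (L1 L2 : A -> V) : lin L1 -> lin L2 -> lin (fun u => L1 u - L2 u).
Proof. by move=> H1 H2; apply: lin_add => //; apply: lin_opp. Qed.
Lemma lin_comp (V : lmodType F) (L1 : A -> A) (L2 : A -> V) : lin L1 -> lin L2 -> lin (fun u => L2 (L1 u)).
Proof. by move=> H1 H2 c u v; rewrite H1 H2. Qed.
Lemma lin_id : lin (fun u : A => u).
Proof. by []. Qed.


Fact eb_key : unit. Proof. by []. Qed.
Definition eb : K -> A := locked_with eb_key (fun k : K => (<< k >> : A)).
Lemma ebE k : eb k = << k >>. Proof. by rewrite /eb unlock. Qed.
Lemma ebasisE a i : ebasis F a i = eb (a, i). Proof. by rewrite ebE. Qed.

Lemma mcoeff_eb k k' : (eb k)@_k' = (k == k')%:R.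
Proof. by rewrite ebE mcoeffU. Qed.

Lemma lmap_eb (V : lmodType F) (h : K -> V) k : lmap h (eb k) = h k.
Proof. by rewrite ebE lmapU1. Qed.

Lemma lin_ext_eb (V : lmodType F) (L1 L2 : A -> V) : lin L1 -> lin L2 ->
  (forall k, L1 (eb k) = L2 (eb k)) -> forall u, L1 u = L2 u.
Proof. by move=> H1 H2 E; apply: lin_ext => // k; rewrite -ebE. Qed.

Lemma lmap_eqh (V : lmodType F) (h1 h2 : K -> V) g :
  (forall k, h1 k = h2 k) -> lmap h1 g = lmap h2 g.
Proof. by move=> E; apply: eq_bigr => k _; rewrite E. Qed.

Definition sh (k l : K) : K := (k.1 + l.1, (k.2 + l.2)%N).

Lemma amulE (f g : A) : amul f g = lmap (fun k => lmap (fun l => eb (sh k l)) g) f.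
Proof.
rewrite /amul /lmap; apply: eq_bigr => k _; rewrite scaler_sumr.
by apply: eq_bigr => l _; rewrite scalerA ebasisE.
Qed.

Definition dh (k : K) : A := (k.1)%:~R *: eb k + (k.2)%:R *: eb (k.1, (k.2).-1).

Lemma aderivE (f : A) : aderiv f = lmap dh f.
Proof.
rewrite /aderiv /lmap; apply: eq_bigr => k _.
by rewrite /dh !ebasisE; case: k.
Qed.

Lemma aderivL c (u v : A) : aderiv (c *: u + v) = c *: aderiv u + aderiv v.
Proof. rewrite (aderivE u) (aderivE v) aderivE; exact: lmap_lin. Qed.

Lemma lin_aderiv : lin (@aderiv F).
Proof. exact: aderivL. Qed.

Lemma amulLl c (u v g : A) : amul (c *: u + v) g = c *: amul u g + amul v g.
Proof. rewrite (amulE u) (amulE v) amulE; exact: lmap_lin. Qed.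

Lemma lin_amul_l (g : A) : lin (fun f => amul f g).
Proof. move=> c u v; exact: amulLl. Qed.

Lemma amulLr c (u v g : A) : amul g (c *: u + v) = c *: amul g u + amul g v.
Proof.
rewrite (amulE g u) (amulE g v) amulE. Time rewrite -[RHS]lmap_h. apply: lmap_eqh => k.
exact: lmap_lin.
Qed.

Lemma lin_amul_r (f : A) : lin (amul f).
Proof. move=> c u v; exact: amulLr. Qed.

Lemma amul_eb k l : amul (eb k) (eb l) = eb (sh k l).
Proof. by rewrite amulE lmap_eb lmap_eb. Qed.

Lemma aderiv_eb k : aderiv (eb k) = dh k.
Proof. by rewrite aderivE lmap_eb. Qed.


Lemma amulDl (u v g : A) : amul (u + v) g = amul u g + amul v g.
Proof. exact: (linD (lin_amul_l g)). Qed.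
Lemma amulZl c (u g : A) : amul (c *: u) g = c *: amul u g.
Proof. exact: (linZ (lin_amul_l g)). Qed.
Lemma amulDr (u v g : A) : amul g (u + v) = amul g u + amul g v.
Proof. exact: (linD (lin_amul_r g)). Qed.
Lemma amulZr c (u g : A) : amul g (c *: u) = c *: amul g u.
Proof. exact: (linZ (lin_amul_r g)). Qed.
Lemma amul0r (g : A) : amul g 0 = 0.
Proof. exact: (lin0 (lin_amul_r g)). Qed.
Lemma amul0l (g : A) : amul 0 g = 0.
Proof. exact: (lin0 (lin_amul_l g)). Qed.

Lemma amul_e00 (w : A) : amul (eb (0, 0%N)) w = w.
Proof.
apply: (lin_ext_eb (lin_amul_r _) lin_id) => -[a i].
by rewrite amul_eb /sh /= add0r add0n.
Qed.

Lemma amulC (f g : A) : amul f g = amul g f.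
Proof.
move: f; apply: (lin_ext_eb (lin_amul_l g) (lin_amul_r g)) => k.
move: g; apply: (lin_ext_eb (lin_amul_r _) (lin_amul_l _)) => l.
by rewrite !amul_eb /sh addrC addnC.
Qed.

Lemma predS1 c n m : (n%:R : F) *: eb (c, (n.-1 + m)%N) = n%:R *: eb (c, (n + m).-1).
Proof. case: n => [|n]; first by erewrite !scale0r. reflexivity. Qed.

Lemma predS2 c n m : (n%:R : F) *: eb (c, (m + n.-1)%N) = n%:R *: eb (c, (m + n).-1).
Proof. case: n => [|n]; first by erewrite !scale0r. by rewrite addnS. Qed.

Lemma aderiv_amul_eb k l :
  aderiv (amul (eb k) (eb l)) = amul (aderiv (eb k)) (eb l) + amul (eb k) (aderiv (eb l)).
Proof.
case: k => a i; case: l => b j.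
erewrite amul_eb, !aderiv_eb; rewrite /dh /sh /=.
erewrite amulDl, !amulZl, amulDr, !amulZr, !amul_eb; rewrite /sh /=.
erewrite predS1, predS2, intrD, natrD, !scalerDl.
exact: addrACA.
Qed.

Lemma aderiv_amul (f g : A) :
  aderiv (amul f g) = amul (aderiv f) g + amul f (aderiv g).
Proof.
move: f.
have H1 : lin (fun f => aderiv (amul f g)).
  by move=> c u v; erewrite amulLl, aderivL.
have H2 : lin (fun f => amul (aderiv f) g + amul f (aderiv g)).
  move=> c u v; erewrite aderivL, amulLl, amulLl, scalerDr.
  exact: addrACA.
apply: (lin_ext_eb H1 H2) => k /=; clear H1 H2.
move: g.
have H3 : lin (fun g => aderiv (amul (eb k) g)).
  by move=> c u v; erewrite amulLr, aderivL.
have H4 : lin (fun g => amul (aderiv (eb k)) g + amul (eb k) (aderiv g)).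
  move=> c u v; erewrite aderivL, amulLr, amulLr, scalerDr.
  exact: addrACA.
apply: (lin_ext_eb H3 H4) => l /=.
exact: aderiv_amul_eb.
Qed.


Lemma dh00 : dh (0, 0%N) = 0.
Proof.
rewrite /dh /=; have -> : ((0:int)%:~R : F) = 0 by [].
have -> : (0%:R : F) = 0 by [].
erewrite !scale0r; exact: addr0.
Qed.

Lemma wpartialE : wpartial F = eb (0, 0%N).
Proof. by rewrite /wpartial ebasisE. Qed.

Lemma ad_partialE (u : A) : ad_partial u = aderiv u.
Proof.
rewrite /ad_partial /wbracket wpartialE.
erewrite aderiv_eb, dh00, amul0r; rewrite subr0.
erewrite amul_e00; reflexivity.
Qed.

Section Abstract.
Variable V : lmodType F.
Lemma absE1 c (P Q R S : V) : (c *: P + Q) - (c *: R + S) = c *: (P - R) + (Q - S).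
Proof. by rewrite opprD addrACA scalerBr. Qed.
Lemma absE2 (P Q P' R : V) : P' = P -> (P + Q) - (P' + R) = (P - R) + (Q - P').
Proof. by move=> ->; rewrite opprD addrACA subrr add0r [RHS]addrC addrA subrK. Qed.
Lemma absE3 x y z w (E E' : V) :
  (x *: E + y *: E') - (z *: E + w *: E') = (x - z) *: E + (y - w) *: E'.
Proof. by rewrite opprD addrACA !scalerBl. Qed.
End Abstract.

Lemma wbrLr (f : A) c u v : wbracket f (c *: u + v) = c *: wbracket f u + wbracket f v.
Proof. rewrite /wbracket; erewrite aderivL, amulLr, amulLl; exact: absE1. Qed.

Lemma wbrLl (g : A) c u v : wbracket (c *: u + v) g = c *: wbracket u g + wbracket v g.
Proof. rewrite /wbracket; erewrite aderivL, amulLr, amulLl; exact: absE1. Qed.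

Lemma lin_br_r (f : A) : lin (wbracket f).
Proof. move=> c u v; exact: wbrLr. Qed.
Lemma lin_br_l (g : A) : lin (fun f => wbracket f g).
Proof. move=> c u v; exact: wbrLl. Qed.

Lemma aderiv_br (u v : A) :
  aderiv (wbracket u v) = wbracket (aderiv u) v + wbracket u (aderiv v).
Proof.
rewrite /wbracket. Time rewrite (linB lin_aderiv). Time erewrite !aderiv_amul.
apply: absE2; exact: amulC.
Qed.

Lemma br_eb a i b j : wbracket (eb (a, i)) (eb (b, j)) =
  (b - a)%:~R *: eb (a + b, (i + j)%N) + (j%:R - i%:R) *: eb (a + b, (i + j).-1).
Proof.
rewrite /wbracket; erewrite !aderiv_eb; rewrite /dh /=.
erewrite amulDr, !amulZr, !amul_eb, amulDr, !amulZr, !amul_eb; rewrite /sh /=.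
erewrite predS2, predS2. Time rewrite (addrC b a) (addnC j i) intrB.
exact: absE3.
Qed.


Lemma mcoeffZA (c : F) (u : A) k : (c *: u)@_k = c * u@_k.
Proof. exact: mcoeffZ. Qed.
Lemma mcoeffDA (u v : A) k : (u + v)@_k = u@_k + v@_k.
Proof. exact: mcoeffD. Qed.

Lemma aderiv_coef (v : A) b j :
  (aderiv v)@_(b, j) = b%:~R * v@_(b, j) + j.+1%:R * v@_(b, j.+1).
Proof.
pose L1 := fun v : A => ((aderiv v)@_(b, j) : F^o).
pose L2 := fun v : A => ((b%:~R * v@_(b, j) + j.+1%:R * v@_(b, j.+1)) : F^o).
have H1 : lin L1.
  move=> c u w; rewrite /L1; erewrite aderivL, mcoeffD; rewrite mcoeffZ; reflexivity.
have H2 : lin L2.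
  move=> c u w; rewrite /L2 !mcoeffD !mcoeffZ /GRing.scale /=.
  rewrite !mulrDr !mulrA -!addrA; congr (_ + _); first by rewrite (mulrC c).
  rewrite addrCA; congr (_ + _); by rewrite (mulrC c).
apply: (lin_ext_eb H1 H2) => -[a i]; rewrite /L1 /L2.
erewrite aderiv_eb; rewrite /dh /=.
erewrite mcoeffDA, !mcoeffZA, !mcoeff_eb; rewrite !xpair_eqE.
have [<-|ne] := eqVneq a b; last by rewrite !andFb !mulr0 addr0.
rewrite !andTb; congr (_ + _); case: i => [|i] /=; first by rewrite mul0r mulr0.
case: eqP => [->|nE]; case: eqP => [E|nE2] //;
  try by [case: nE2]; try by [case: nE; case: E]; by rewrite !mulr0.
Qed.


Lemma nat_nz (charF0 : [pchar F] =i pred0) n : (n.+1%:R : F) != 0.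
Proof. by rewrite (iffLR (pcharf0P F) charF0). Qed.

Lemma int_nz (charF0 : [pchar F] =i pred0) (z : int) : z != 0 -> (z%:~R : F) != 0.
Proof.
have H := (iffLR (pcharf0P F) charF0).
case: z => n nz; first by rewrite -pmulrn H.
by rewrite NegzE mulrNz oppr_eq0 -pmulrn H.
Qed.

Lemma eigen (charF0 : [pchar F] =i pred0) (v : A) (a : int) :
  aderiv v = a%:~R *: v -> v = v@_(a, 0%N) *: eb (a, 0%N).
Proof.
move=> Hv.
have Hc b j : b%:~R * v@_(b, j) + j.+1%:R * v@_(b, j.+1) = a%:~R * v@_(b, j).
  by rewrite -aderiv_coef Hv mcoeffZA.
pose N := (\max_(k <- msupp v) k.2).+1.
have big b j : (N <= j)%N -> v@_(b, j) = 0.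
  move=> Hj; apply: mcoeff_outdom; apply/negP => Hin.
  have := @leq_bigmax_seq _ (msupp v : seq K) xpredT (fun k : K => k.2) _ Hin isT.
  rewrite /= => Hle; move: Hj; rewrite /N ltnNge => /negP; apply.
  by [].
have off b : b != a -> forall j, v@_(b, j) = 0.
  move=> nba.
  suff H : forall d j, (N <= j + d)%N -> v@_(b, j) = 0.
    by move=> j; apply: (H N); exact: leq_addl.
  elim=> [|d IH] j Hj; first by apply: big; rewrite addn0 in Hj.
  have h1 : v@_(b, j.+1) = 0 by apply: IH; rewrite addSnnS.
  have := Hc b j; rewrite h1 mulr0 addr0 => /eqP; rewrite -subr_eq0 -mulrBl mulf_eq0.
  case/orP => [|/eqP //].
  rewrite -intrB => /eqP E; exfalso; move: E; apply/eqP; apply: int_nz => //.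
  by rewrite subr_eq0.
have on j : v@_(a, j.+1) = 0.
  have := Hc a j; rewrite addrC => /(congr1 (fun t => t - a%:~R * v@_(a, j))).
  rewrite addrK subrr => /eqP; rewrite mulf_eq0 (negbTE (nat_nz charF0 j)) /=.
  by move/eqP.
apply/malgP => -[b j]; rewrite mcoeffZA mcoeff_eb.
have [->|nba] := eqVneq b a; last first.
  rewrite (off b nba); case: eqP => [[E _]|_]; last by rewrite mulr0.
  by rewrite E eqxx in nba.
case: j => [|j]; first by rewrite eqxx mulr1.
rewrite on; case: eqP => [E|_]; last by rewrite mulr0.
by move: E => -[].
Qed.


Lemma dh_a0 a : dh (a, 0%N) = a%:~R *: eb (a, 0%N).
Proof.
rewrite /dh /=; have -> : (0%:R : F) = 0 by [].
erewrite scale0r; exact: addr0.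
Qed.

Lemma dh01 : dh (0, 1%N) = eb (0, 0%N).
Proof.
rewrite /dh /=; have -> : ((0:int)%:~R : F) = 0 by [].
have -> : (1%:R : F) = 1 by [].
erewrite scale0r, scale1r; exact: add0r.
Qed.

Lemma br_01 a i : wbracket (eb (0, 1%N)) (eb (a, i)) =
  a%:~R *: eb (a, i.+1) + (i%:R - 1) *: eb (a, i).
Proof.
erewrite br_eb. Time rewrite subr0 add0r. reflexivity.
Qed.

Lemma br_1m1 i : wbracket (eb (1, 0%N)) (eb (-1, i)) =
  (-1 - 1)%:~R *: eb (0, i) + i%:R *: eb (0, i.-1).
Proof.
erewrite br_eb. Time rewrite subr0. reflexivity.
Qed.


Lemma br_1m1_0 : wbracket (eb (1, 0%N)) (eb (-1, 0%N)) = (-1 - 1)%:~R *: eb (0, 0%N).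
Proof.
erewrite br_1m1; have -> : (0%:R : F) = 0 by [].
erewrite scale0r; exact: addr0.
Qed.

Section Abstract2.
Variable V : lmodType F.
Lemma absD (m : F) (X Y Z W : V) : (X + Y) - m *: (Z + W) = (X - m *: Z) + (Y - m *: W).
Proof. by rewrite scalerDr opprD addrACA. Qed.
Lemma absZ (c m : F) (X Z : V) : c *: X - m *: (c *: Z) = c *: (X - m *: Z).
Proof. by rewrite scalerBr !scalerA mulrC. Qed.
Lemma absS (m : F) (X Z : V) : X = m *: Z + (X - m *: Z).
Proof. by rewrite addrC subrK. Qed.
Lemma absL (l m : F) (a : F) (E : V) : l *: E - m *: (a *: E) = (l - m * a) *: E.
Proof. by rewrite scalerA scalerBl. Qed.
Lemma absCancel (c : F) (x z y y' : V) : c != 0 -> y = y' -> c *: x + y = c *: z + y' -> x = z.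
Proof.
move=> nz -> /addIr H.
by rewrite -[x]scale1r -(mulVf nz) -scalerA H scalerA mulVf // scale1r.
Qed.
Lemma absZ0 (m : F) : (0 : V) - m *: 0 = 0.
Proof. by rewrite scaler0 subr0. Qed.
Lemma absN0 (c n : F) (E : V) : c != 0 -> c *: 0 = n *: (c *: E) -> n *: E = 0.
Proof.
move=> nz; rewrite scaler0 scalerA mulrC -scalerA => /esym /eqP.
by rewrite scaler_eq0 (negbTE nz) /= => /eqP.
Qed.
Lemma absZero (c d : F) (x e e2 Y : V) : c != 0 -> c *: x + d *: (0 *: e) = 0 *: Y -> x = 0 *: e2.
Proof.
move=> nz; rewrite !scale0r scaler0 addr0 => /eqP; rewrite scaler_eq0 (negbTE nz) /=.
by move/eqP.
Qed.
Lemma absSc (n : F) (c d : F) (E E' : V) : n *: (c *: E + d *: E') = c *: (n *: E) + d *: (n *: E').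
Proof. by rewrite scalerDr !scalerA (mulrC n c) (mulrC n d). Qed.
End Abstract2.

End Work.

Unset Implicit Arguments.
Unset Strict Implicit.
Theorem lemma4 (F : fieldType) (charF0 : [pchar F] =i pred0)
  (D : Wstar F -> Wstar F) :
  is_derivation D -> D (wpartial F) = 0 ->
  exists (f : F) (S : Wstar F -> Wstar F),
    is_scalar_derivation S /\ forall u, D u = f *: ad_partial u + S u.
Proof.
case=> Dadd Dsc Dbr HD0.
have Dlin : lin D by move=> c u v; rewrite Dadd Dsc.
have HD00 : D (eb F (0, 0%N)) = 0 by rewrite -wpartialE.
have Dcomm u : D (aderiv u) = aderiv (D u).
  rewrite -(ad_partialE u) -(ad_partialE (D u)) /ad_partial Dbr HD0.
  have Z0 : wbracket 0 u = 0 := lin0 (lin_br_l u).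
  by rewrite Z0 add0r.
pose lam a := (D (eb F (a, 0%N)))@_(a, 0%N).
have HA a : D (eb F (a, 0%N)) = lam a *: eb F (a, 0%N).
  apply: (eigen charF0); rewrite -Dcomm aderiv_eb dh_a0; exact: linZ.
pose mu := (D (eb F (0, 1%N)))@_(0, 0%N).
have HB : D (eb F (0, 1%N)) = mu *: eb F (0, 0%N).
  have := @eigen F charF0 (D (eb F (0, 1%N))) 0.
  rewrite -Dcomm aderiv_eb dh01 HD00.
  have -> : ((0:int)%:~R : F) = 0 by [].
  by rewrite scale0r; apply.
pose S u := D u - mu *: aderiv u.
have SD u v : S (u + v) = S u + S v.
  by rewrite /S Dadd (linD (@lin_aderiv F)); exact: absD.
have SZ c u : S (c *: u) = c *: S u.
  by rewrite /S Dsc (linZ (@lin_aderiv F)); exact: absZ.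
have SL : lin S by move=> c u v; rewrite SD SZ.
have Sbr u v : S (wbracket u v) = wbracket (S u) v + wbracket u (S v).
  rewrite /S Dbr aderiv_br (linB (lin_br_l v)) (linB (lin_br_r u)).
  by rewrite (linZ (lin_br_l v)) (linZ (lin_br_r u)); exact: absD.
exists mu, S; split; last first.
  by move=> u; rewrite ad_partialE /S; exact: absS.
split; first by split.
pose nu a := lam a - mu * a%:~R.
have S0 a : S (eb F (a, 0%N)) = nu a *: eb F (a, 0%N).
  by rewrite /S HA aderiv_eb dh_a0; exact: absL.
have S01 : S (eb F (0, 1%N)) = 0.
  by rewrite /S HB aderiv_eb dh01; exact: subrr.
have S00 : S (eb F (0, 0%N)) = 0.
  by rewrite /S HD00 aderiv_eb dh00; exact: absZ0.
have nu0 : nu 0 = 0.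
  by rewrite /nu /lam HD00 mcoeff0 mulr0 subr0.
have nusum : nu 1 + nu (-1) = 0.
  have := Sbr (eb F (1, 0%N)) (eb F (-1, 0%N)).
  rewrite S0 S0 (linZ (lin_br_l _)) (linZ (lin_br_r _)) -scalerDl br_1m1_0 SZ S00.
  move=> H; have := absN0 (int_nz charF0 (isT : (-1 - 1 : int) != 0)) H.
  move/(congr1 (mcoeff (0, 0%N))); rewrite mcoeffZA mcoeff_eb eqxx mulr1 => ->.
  exact: mcoeff0.
have Sall : forall i a, S (eb F (a, i)) = nu a *: eb F (a, i).
  elim=> [|i IH] a; first exact: S0.
  have Snz b : b != 0 -> S (eb F (b, i.+1)) = nu b *: eb F (b, i.+1).
    move=> nb.
    have := Sbr (eb F (0, 1%N)) (eb F (b, i)).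
    have Z0 : wbracket 0 (eb F (b, i)) = 0 := lin0 (lin_br_l _).
    rewrite S01 Z0 add0r IH (linZ (lin_br_r _)) br_01 SD !SZ IH absSc => H.
    exact: (absCancel (int_nz charF0 nb) (erefl _) H).
  have [->|na] := eqVneq a 0; last exact: Snz.
  have := Sbr (eb F (1, 0%N)) (eb F (-1, i.+1)).
  rewrite S0 (Snz (-1) isT) (linZ (lin_br_l _)) (linZ (lin_br_r _)) -scalerDl nusum.
  rewrite br_1m1 SD !SZ IH nu0 => H.
  by move: H; apply: absZero; apply: int_nz.
move=> a i; exists (nu a); rewrite ebasisE; exact: Sall.
Qed.
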